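(* Let $S$ be a finite semigroup. If every direct power $\Pi\mathrm{Pr}(S)=\prod_{i\in I}\mathrm{Pr}(S)$ is $\mathcal{L}_{s\text{-}pred}(\Pi S)$-equationally Noetherian, then $\mathrm{Ker}(S)=\mathrm{Red}(S)$ and $\mathrm{Ker}(S)$ is a rectangular band of groups.
   Context: $\mathcal{L}_{s\text{-}pred}=\{M\}$ with $M$ ternary; $\mathrm{Pr}(S)$ is the structure on $S$ with $M(x,y,z)\Leftrightarrow xy=z$. The direct power consists of sequences $[a_i\mid i\in I]$ with $M$ holding coordinatewise; $\mathcal{L}_{s\text{-}pred}(\Pi S)$ adds a constant symbol for every element of the power. Equations are atomic formulas ($M(t_1,t_2,t_3)$ or $t_1=t_2$, each $t_k$ a variable or constant); systems are sets of equations in a fixed finite set of variables; a structure is equationally Noetherian (in this language) if every system is equivalent (same solution set) to a finite subsystem. $\mathrm{Ker}(S)$ is the minimal two-sided ideal of $S$; $\mathrm{Red}(S)=\{ab\mid a,b\in S\}$ is the set of reducible elements. A semigroup is a rectangular band of groups if it is isomorphic to the set of triples $(\lambda,g,i)$, $\lambda\in\Lambda$, $g\in G$, $i\in I$ (for a finite group $G$ and finite sets $\Lambda,I$) with multiplication $(\lambda,g,i)(\mu,h,j)=(\lambda,gh,j)$. *)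

(* Defs.v *)
From mathcomp Require Import all_boot all_fingroup.
From Stdlib Require Import List.
Set Implicit Arguments. Unset Strict Implicit. Unset Printing Implicit Defensive.

Inductive term (n : nat) (A : Type) : Type :=
| TVar of 'I_n
| TConst of A.

Inductive equation (n : nat) (A : Type) : Type :=
| EqM of term n A & term n A & term n A
| EqE of term n A & term n A.

Definition eval_term n A (v : 'I_n -> A) (t : term n A) : A :=
  match t with TVar i => v i | TConst a => a end.

Definition sat_eq n A (M : A -> A -> A -> Prop) (v : 'I_n -> A)
    (e : equation n A) : Prop :=
  match e with
  | EqM t1 t2 t3 => M (eval_term v t1) (eval_term v t2) (eval_term v t3)
  | EqE t1 t2 => eval_term v t1 = eval_term v t2
  end.

Definition eq_noetherian (A : Type) (M : A -> A -> A -> Prop) : Prop :=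
  forall (n : nat) (Sys : equation n A -> Prop),
    exists l : list (equation n A),
      (forall e, In e l -> Sys e) /\
      (forall v : 'I_n -> A,
          (forall e, Sys e -> sat_eq M v e) <-> (forall e, In e l -> sat_eq M v e)).

Definition PrM (T : Type) (mul : T -> T -> T) (x y z : T) : Prop := mul x y = z.

Definition powM (I T : Type) (mul : T -> T -> T) (x y z : I -> T) : Prop :=
  forall i, PrM mul (x i) (y i) (z i).

Definition is_ideal (T : finType) (mul : T -> T -> T) (K : {set T}) : Prop :=
  K != set0 /\ (forall s k, k \in K -> mul s k \in K /\ mul k s \in K).

Definition is_minimal_ideal (T : finType) (mul : T -> T -> T) (K : {set T}) :=
  is_ideal mul K /\ (forall J, is_ideal mul J -> J \subset K -> J = K).

Definition Red (T : finType) (mul : T -> T -> T) : {set T} :=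
  [set x | [exists a, exists b, mul a b == x]].

Definition rect_band_of_groups (T : finType) (mul : T -> T -> T) (K : {set T})
  : Prop :=
  exists (Lam Idx : finType) (gT : finGroupType)
         (f : Lam * gT * Idx -> T),
    injective f /\
    (forall x, x \in K <-> exists p, f p = x) /\
    (forall l g i m h j,
        mul (f (l, g, i)) (f (m, h, j)) = f (l, (g * h)%g, j)).

(* Main.v *)
Require Import Defs.
From HB Require Import structures.
From mathcomp Require Import all_boot all_fingroup zify.
From Stdlib Require Import List.
Set Implicit Arguments. Unset Strict Implicit. Unset Printing Implicit Defensive.
Lemma bound_list (A : Type) (P : nat -> A -> Prop) (l : list A) :
  (forall a, In a l -> exists j, P j a) ->
  exists N, forall a, In a l -> exists j, j < N /\ P j a.
Proof.
elim: l => [|a l IH] H; first by exists 0.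
have [N HN] := IH (fun b Hb => H b (or_intror Hb)).
have [j Hj] := H a (or_introl erefl).
exists (maxn N j).+1 => b [<-|Hb]; first by exists j; split => //; rewrite ltnS leq_maxr.
have [j' [lt' Pj']] := HN b Hb; exists j'; split => //.
by rewrite ltnS (leq_trans (ltnW lt')) // leq_maxl.
Qed.

Lemma P1 (T : finType) (mul : T -> T -> T) :
  eq_noetherian (@powM nat T mul) ->
  forall c c' x0, mul c x0 = mul c' x0 -> forall x, mul c x = mul c' x.
Proof.
move=> HN c c' x0 H0 x1.
pose C j : nat -> T := fun i => if i == j then c else c'.
pose eqj j : equation 2 (nat -> T) :=
  EqM (TConst 2 (C j)) (TVar _ (@Ordinal 2 0 isT)) (TVar _ (@Ordinal 2 1 isT)).
have [l [Hl Heq]] := HN 2 (fun e => exists j, e = eqj j).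
have [N HNl] := @bound_list _ (fun j e => e = eqj j) l Hl.
pose v : 'I_2 -> nat -> T := fun k i =>
  if val k == 0 then (if i == N then x1 else x0)
  else (if i == N then mul c' x1 else mul c x0).
have Hv : forall e, In e l -> sat_eq (@powM nat T mul) v e.
  move=> e He; have [j [ltj ->]] := HNl e He; move=> i /=; rewrite /PrM /v /C /=.
  case: (i =P N) => [->|_]; first by rewrite (gtn_eqF ltj).
  by case: (i == j).
have := (proj2 (Heq v) Hv (eqj N) (ex_intro _ N erefl) N).
by rewrite /PrM /v /C /= eqxx.
Qed.
Record gdata := GData {
  gcar : finType;
  gop : gcar -> gcar -> gcar;
  gopA : associative gop;
  ge : gcar;
  geid : gop ge ge = ge;
  ginvex : forall g, gop ge (gop g ge) = g ->
     exists h, gop ge (gop h ge) = h /\ gop h g = ge }.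

Definition Gty (D : gdata) := {x : gcar D | gop (ge D) (gop x (ge D)) == x}.
HB.instance Definition _ (D : gdata) := Finite.on (Gty D).

Lemma G_el (D : gdata) (x : gcar D) : gop (ge D) (gop x (ge D)) = x ->
  gop (ge D) x = x /\ gop x (ge D) = x.
Proof.
move=> H; split.
  by rewrite -{2}H -{1}H gopA geid.
by rewrite -{2}H -{1}H -!gopA geid.
Qed.

Lemma G_closed (D : gdata) (x y : Gty D) :
  gop (ge D) (gop (gop (val x) (val y)) (ge D)) == gop (val x) (val y).
Proof.
have [hx _] := G_el (eqP (valP x)); have [_ hy] := G_el (eqP (valP y)).
by rewrite !gopA hx -!gopA hy.
Qed.

Definition gP (D : gdata) (z : gcar D) := gop (ge D) (gop z (ge D)) == z.
Definition gmul (D : gdata) (x y : Gty D) : Gty D := @exist _ (@gP D) _ (G_closed x y).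
Definition gone (D : gdata) : Gty D :=
  @exist _ (@gP D) (ge D) (introT eqP (etrans (congr1 (gop (ge D)) (geid D)) (geid D))).
Definition ginv (D : gdata) (x : Gty D) : Gty D :=
  odflt (gone D) [pick h : Gty D | gmul h x == gone D].

Lemma gmulA (D : gdata) : associative (@gmul D).
Proof. by move=> x y z; apply: val_inj; rewrite /= gopA. Qed.
Lemma gmul1 (D : gdata) : left_id (gone D) (@gmul D).
Proof. by move=> x; apply: val_inj => /=; have [-> _] := G_el (eqP (valP x)). Qed.
Lemma gmulV (D : gdata) : left_inverse (gone D) (@ginv D) (@gmul D).
Proof.
move=> x; rewrite /ginv; case: pickP => [h /eqP //|/= H].
have [h [Hh Hhx]] := ginvex (eqP (valP x)).
have := H (@exist _ (@gP D) h (introT eqP Hh)).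
by have -> : gmul (@exist _ (@gP D) h (introT eqP Hh)) x == gone D by apply/eqP/val_inj.
Qed.

HB.instance Definition _ (D : gdata) :=
  Finite_isGroup.Build (Gty D) (@gmulA D) (@gmul1 D) (@gmulV D).

Lemma valM (D : gdata) (x y : Gty D) : val (x * y)%g = gop (val x) (val y).
Proof. by []. Qed.
Lemma val1 (D : gdata) : val (1 : Gty D)%g = ge D.
Proof. by []. Qed.

Lemma gP_mk (D : gdata) (z : gcar D) : gP (gop (ge D) (gop z (ge D))).
Proof. by apply/eqP; rewrite !gopA geid -!gopA geid. Qed.
Definition Gmk (D : gdata) (z : gcar D) : Gty D := @exist _ (@gP D) _ (gP_mk z).
Definition pw (T : Type) (mul : T -> T -> T) (k : T) (n : nat) := iter n (mul k) k.

Lemma pwD (T : Type) (mul : T -> T -> T) (mulA : associative mul) k a b :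
  mul (pw mul k a) (pw mul k b) = pw mul k (a + b).+1.
Proof.
elim: a => [|a IH] //=.
by rewrite /pw /= -/(pw mul k a) -mulA IH.
Qed.

Lemma idem_pow (T : finType) (mul : T -> T -> T) (mulA : associative mul) k :
  exists n, mul (pw mul k n) (pw mul k n) = pw mul k n.
Proof.
have : [exists i : 'I_#|T|.+1, exists j : 'I_#|T|.+1,
          (i < j) && (pw mul k i == pw mul k j)].
  apply: contraT; rewrite negb_exists => /forallP H.
  have inj : injective (fun i : 'I_#|T|.+1 => pw mul k i).
    move=> i j Hij; apply/eqP; case: (ltngtP i j) => // Hlt.
    - by have /existsPn/(_ j) := H i; rewrite Hlt Hij eqxx.
    - by have /existsPn/(_ i) := H j; rewrite Hlt Hij eqxx.
    - by rewrite -val_eqE /= Hlt.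
  by have := leq_card _ inj; rewrite card_ord ltnn.
case/existsP => i /existsP [j /andP [lt /eqP E]].
set p := j - i.
have per : forall m, i <= m -> pw mul k m = pw mul k (m + p).
  move=> m le; have [t ->] : exists t, m = i + t by exists (m - i); rewrite subnKC.
  case: t => [|t]; first by rewrite addn0 /p subnKC ?(ltnW lt).
  rewrite -addSnnS -pwD // E pwD //.
  congr (pw _ _); rewrite /p; have := ltnW lt; lia.
have perq : forall q m, i <= m -> pw mul k m = pw mul k (m + q * p).
  elim=> [|q IH] m le; first by rewrite mul0n addn0.
  rewrite IH // per; last by rewrite (leq_trans le) ?leq_addr.
  congr (pw _ _); lia.
have p1 : 0 < p by rewrite subn_gt0.
exists (i * p + p).-1.
rewrite pwD // [RHS](perq i.+1); last by have := p1; nia.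
congr (pw _ _); rewrite mulSn; move: (i * p) p1 => u; lia.
Qed.
Unset Implicit Arguments.
Theorem theorem4 (T : finType) (mul : T -> T -> T)
    (mulA : associative mul) :
  (forall I : Type, eq_noetherian (@powM I T mul)) ->
  forall K : {set T}, is_minimal_ideal mul K ->
    K = Red mul /\ rect_band_of_groups mul K.
Proof.
move=> HN K [[Kne Kid] Kmin].
have P1' := P1 (HN nat).
have [k kK] := set0Pn K Kne.
have pwK : forall n, pw mul k n \in K.
  by elim=> [|n IH] //; exact: (Kid k _ IH).1.
have [n ee] := idem_pow mulA k.
set e := pw mul k n in ee.
have eK : e \in K by apply: pwK.
have I1 : forall a x, mul a x = mul a (mul e x).
  move=> a x; rewrite mulA; apply: (P1' a (mul a e) e).
  by rewrite -mulA ee.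
have KSeS : K = [set x | [exists s, exists t, mul s (mul e t) == x]].
  symmetry; apply: Kmin.
  - split.
      apply/set0Pn; exists e; rewrite inE; apply/existsP; exists e.
      by apply/existsP; exists e; rewrite !ee.
    move=> s x; rewrite !inE => /existsP [a /existsP [b /eqP <-]].
    split; apply/existsP.
      by exists (mul s a); apply/existsP; exists b; rewrite !mulA.
    by exists a; apply/existsP; exists (mul b s); rewrite !mulA.
  - apply/subsetP => x; rewrite inE => /existsP [a /existsP [b /eqP <-]].
    exact: (Kid a _ (Kid b e eK).2).1.
split.
  apply/setP => x; rewrite KSeS !inE; apply/idP/idP.
    case/existsP => s /existsP [t /eqP <-].
    by apply/existsP; exists s; apply/existsP; exists (mul e t).
  case/existsP => a /existsP [b /eqP <-].
  by apply/existsP; exists a; apply/existsP; exists b; rewrite -I1.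
have invex : forall g, mul e (mul g e) = g ->
     exists h, mul e (mul h e) = h /\ mul h g = e.
  move=> g Hg.
  have eg : mul e g = g by rewrite -Hg !mulA ee.
  have ge : mul g e = g by rewrite -Hg -!mulA ee.
  have [m idm] := idem_pow mulA g.
  have epw : forall q, mul e (pw mul g q) = pw mul g q.
    by elim=> [|q IH] //=; rewrite mulA eg.
  have pwe : forall q, mul (pw mul g q) e = pw mul g q.
    by elim=> [|q IH] //=; rewrite -mulA -/(pw mul g q) IH.
  have fe : pw mul g m = e.
    have H : mul (pw mul g m) e = mul e e.
      by apply: (P1' _ _ (pw mul g m)); rewrite idm epw.
    by rewrite pwe ee in H.
  exists (pw mul g (m + m)); split; first by rewrite pwe epw.
  by rewrite -[X in mul _ X]/(pw mul g 0) pwD // addn0 -pwD // idm fe.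
pose D := @GData T mul mulA e ee invex.
have GP : forall g : Gty D, mul e (val g) = val g /\ mul (val g) e = val g.
  by move=> g; apply: (@G_el D); apply/eqP; exact: (valP g).
pose Lam := {x : T | (mul x e == x) && (mul e x == e)}.
pose Idx := {y : T | (mul e y == y) && (mul y e == e)}.
have LP : forall l : Lam, mul (val l) e = val l /\ mul e (val l) = e.
  by move=> l; case/andP: (valP l) => /eqP-> /eqP->.
have IP : forall i : Idx, mul e (val i) = val i /\ mul (val i) e = e.
  by move=> i; case/andP: (valP i) => /eqP-> /eqP->.
have gV : forall g : Gty D, mul (val g) (val g^-1%g) = e.
  by move=> g; exact: (congr1 val (mulgV g)).
have Vg : forall g : Gty D, mul (val g^-1%g) (val g) = e.
  by move=> g; exact: (congr1 val (mulVg g)).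
exists Lam, Idx, (Gty D),
  (fun p => mul (mul (val p.1.1) (val p.1.2)) (val p.2)).
split; [|split].
- move=> [[l g] i] [[l' g'] i'] /= H.
  have keyg : forall (l : Lam) (g : Gty D) (i : Idx),
      mul e (mul (mul (mul (val l) (val g)) (val i)) e) = val g.
    move=> l0 g0 i0; rewrite !mulA (LP l0).2 (GP g0).1 -mulA (IP i0).2.
    exact: (GP g0).2.
  have Eg : g = g' by apply: val_inj; rewrite -(keyg l g i) H keyg.
  subst g'.
  have keyl : forall (l : Lam) (i : Idx),
      mul (mul (mul (mul (val l) (val g)) (val i)) e) (val g^-1%g) = val l.
    move=> l0 i0; rewrite -(mulA _ (val i0)) (IP i0).2 -(mulA (val l0)).
    by rewrite (GP g).2 -mulA gV (LP l0).1.
  have keyi : forall (l : Lam) (i : Idx),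
      mul (val g^-1%g) (mul e (mul (mul (val l) (val g)) (val i))) = val i.
    move=> l0 i0; rewrite !mulA -(mulA _ e) (LP l0).2 -(mulA _ e) (GP g).1.
    by rewrite Vg (IP i0).1.
  have El : l = l' by apply: val_inj; rewrite -(keyl l i) H keyl.
  have Ei : i = i' by apply: val_inj; rewrite -(keyi l i) H keyi.
  by rewrite El Ei.
- move=> x; split.
  + move=> xK.
    move: (xK); rewrite KSeS inE => /existsP [s /existsP [t /eqP Ex]].
    pose a := @Gmk D s; pose b := @Gmk D t.
    pose g := (a * b)%g; pose h := (g^-1)%g.
    have vg : val g = mul e (mul x e).
      change (val g) with (mul (mul e (mul s e)) (mul e (mul t e))).
      by rewrite -Ex !mulA -(mulA _ e e) ee.
    have hP := GP h.
    have lP : (mul (mul x (val h)) e == mul x (val h)) &&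
              (mul e (mul x (val h)) == e).
      apply/andP; split; apply/eqP; first by rewrite -mulA hP.2.
      by rewrite mulA I1 mulA -(mulA e x e) -vg gV.
    have iP : (mul e (mul (val h) x) == mul (val h) x) &&
              (mul (mul (val h) x) e == e).
      apply/andP; split; apply/eqP; first by rewrite mulA hP.1.
      by rewrite -mulA I1 -vg Vg.
    exists ((@exist _ (fun z => (mul z e == z) && (mul e z == e)) _ lP : Lam), g,
      (@exist _ (fun z => (mul e z == z) && (mul z e == e)) _ iP : Idx)) => /=.
    have F1 : mul (mul (mul e t) (val h)) (mul s e) = e.
      have E1 : mul (mul e t) (val h) = mul (val b) (val h).
        by rewrite (I1 (mul e t) (val h)) -!mulA.
      have E2 : mul (val h) (mul s e) = mul (val h) (val a).
        by rewrite (I1 (val h) (mul s e)).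
      rewrite E1 -mulA E2.
      have G1 : (b * (h * a) = 1)%g.
        by rewrite /h /g invMg -mulgA mulVg mulg1 mulgV.
      exact: (congr1 val G1).
    change (mul (mul (mul x (val h)) (val g)) (mul (val h) x) = x).
    have hg : mul (val h) (val g) = e := Vg g.
    rewrite -(mulA x (val h) (val g)) hg -mulA (mulA e) hP.1 mulA -Ex.
    have -> : mul (mul (mul s (mul e t)) (val h)) (mul s (mul e t)) =
              mul s (mul (mul (mul (mul e t) (val h)) (mul s e)) t)
      by rewrite !mulA.
    by rewrite F1.
  + case=> [[[l g] i] <-] /=.
    rewrite -(LP l).1.
    exact: (Kid (val i) _ (Kid (val g) _ (Kid (val l) e eK).1).2).2.
- move=> l g i m h j /=.
  have im : mul (val i) (val m) = e by rewrite I1 (LP m).2 (IP i).2.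
  have -> : mul (mul (mul (val l) (val g)) (val i))
                (mul (mul (val m) (val h)) (val j)) =
            mul (mul (val l) (mul (val g) (mul (val i) (val m))))
                (mul (val h) (val j)) by rewrite !mulA.
  by rewrite im (GP g).2 !mulA.
Qed.
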